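(* Let $r$ be a positive integer and suppose $1/(r+1)<\vartheta<1$. Let $(Z_t)$ be the random walk of the context with $c=1$, and let $\varrho\in(0,1)$ be the unique solution in $[0,1)$ of $\varrho=(1-\vartheta)+\vartheta\varrho^{r+1}$. Let $\varphi(z):=\mathbb{E}[z^{\tau(1)}\mathbf{1}\{\tau(1)<\infty\}]$ for $z\in[-1,1]$; it satisfies $\varphi(z)=z(1-\vartheta)+z\vartheta\varphi(z)^{r+1}$. Then for all $u\in\mathbb{N}$, $$\mathbb{E}[\tau(u)\mid\tau(u)<\infty]=u\,\frac{\varphi'(1)}{\varrho}=\frac{u\varrho}{(1-\vartheta)(r+1)-r\varrho},$$ where $\varphi'(1)$ is the derivative from below. In particular, for the single-agent trust model with prior parameters $\alpha,\beta\in\mathbb{N}$ and $c=1$, the expected quitting time conditional on quitting is $q(\alpha,\beta,1,r,\vartheta)=\mathbb{E}[\tau(u_{\rm crit})\mid\tau(u_{\rm crit})<\infty]$ with $u_{\rm crit}=r\alpha-\beta+1$.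
   Context: Random walk: for $\vartheta\in(0,1)$ and positive integers $c,r$, let $Z_0=0$ and $Z_t=Z_{t-1}+\Delta_t$ with $\Delta_t$ i.i.d., $\Delta_t=+c$ with probability $1-\vartheta$ and $-r$ with probability $\vartheta$. Define $\tau(u):=\inf\{t\in\mathbb{N}_0: Z_t\ge u\}$. Single-agent trust model: $(X_t)$ i.i.d. Bernoulli$(\vartheta)$; $\hat S_t=\sum_{s\le t}X_s\mathbf{1}_{\{A_s=1\}}$, $\hat F_t=\sum_{s\le t}(1-X_s)\mathbf{1}_{\{A_s=1\}}$, $\hat\vartheta_t=\frac{\alpha+\hat S_t}{\alpha+\beta+\hat S_t+\hat F_t}$; $A_t=1$ iff $r\hat\vartheta_n-c(1-\hat\vartheta_n)\ge0$ for all $n\le t-1$; $\tau:=\inf\{t: r\hat\vartheta_t-c(1-\hat\vartheta_t)<0\}$ (the first $t$ with $c\hat F_t-r\hat S_t\ge r\alpha-c\beta+1$); $q(\alpha,\beta,c,r,\vartheta):=\mathbb{E}[\tau\mid\tau<\infty]$. *)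

(* Defs.v *)
From HB Require Import structures.
From mathcomp Require Import all_boot all_order all_algebra.
From mathcomp Require Import all_classical all_reals all_analysis.
Set Implicit Arguments. Unset Strict Implicit. Unset Printing Implicit Defensive.
Import Order.TTheory GRing.Theory Num.Theory.
Local Open Scope ring_scope.

(* An outcome sequence s = [:: X_1; ...; X_t] of i.i.d. Bernoulli(theta)
   variables; [true] (probability theta) is a "success" X = 1 and
   [false] (probability 1 - theta) a "failure" X = 0. *)
Definition seqprob {R : realType} (theta : R) (s : seq bool) : R :=
  \prod_(b <- s) (if b then theta else 1 - theta).

(* P(stopping time = t), for a stopping rule given by [stop s] = "the
   stopping time equals size s on any outcome path beginning with s". *)
Definition Pstop {R : realType} (stop : seq bool -> bool) (theta : R) (t : nat) : R :=
  \sum_(s : t.-tuple bool) seqprob theta s * (stop s)%:R.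

Definition Pfin {R : realType} (stop : seq bool -> bool) (theta : R) : \bar R :=
  (\sum_(t <oo) (Pstop stop theta t)%:E)%E.

Definition Efin {R : realType} (stop : seq bool -> bool) (theta : R) : \bar R :=
  (\sum_(t <oo) (t%:R * Pstop stop theta t)%:E)%E.

Definition cond_exp {R : realType} (stop : seq bool -> bool) (theta : R) : \bar R :=
  (Efin stop theta * ((fine (Pfin stop theta))^-1)%:E)%E.

Definition Zwalk (c r : nat) (n : nat) (s : seq bool) : int :=
  \sum_(i < n) (if nth false s i then - (r%:Z) else c%:Z).

Definition walk_hit (c r : nat) (u : int) (s : seq bool) : bool :=
  (u <= Zwalk c r (size s) s) && all (fun k => Zwalk c r k s < u) (iota 0 (size s)).

Definition phi {R : realType} (r : nat) (theta : R) (z : R) : R :=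
  limn (fun n => \sum_(t < n) Pstop (walk_hit 1 r 1) theta t * z ^+ t).

(* state after processing the outcomes s: (S_hat, F_hat, A) where A is the
   indicator A_{size s} that the agent acted in the last round
   (A = true initially, i.e. A_0 is irrelevant). *)
Definition theta_hat {R : realType} (alpha beta : nat) (Sh Fh : nat) : R :=
  (alpha + Sh)%:R / (alpha + beta + Sh + Fh)%:R.

Definition trust_ok {R : realType} (alpha beta c r : nat) (Sh Fh : nat) : bool :=
  0 <= r%:R * theta_hat alpha beta Sh Fh - c%:R * (1 - theta_hat (R:=R) alpha beta Sh Fh).

Definition trust_step {R : realType} (alpha beta c r : nat)
    (st : nat * nat * bool) (x : bool) : nat * nat * bool :=
  let: (Sh, Fh, act) := st in
  (* A_t = 1 iff the criterion held at all n <= t-1 *)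
  let act' := act && trust_ok (R:=R) alpha beta c r Sh Fh in
  (Sh + (x && act'), Fh + (~~ x && act'), act').

Definition trust_state {R : realType} (alpha beta c r : nat) (s : seq bool) :
    nat * nat * bool := foldl (trust_step (R:=R) alpha beta c r) (0%N, 0%N, true) s.

Definition trust_ok_at {R : realType} (alpha beta c r : nat) (n : nat) (s : seq bool) : bool :=
  let: (Sh, Fh, _) := trust_state (R:=R) alpha beta c r (take n s) in
  trust_ok (R:=R) alpha beta c r Sh Fh.

Definition trust_quit {R : realType} (alpha beta c r : nat) (s : seq bool) : bool :=
  ~~ trust_ok_at (R:=R) alpha beta c r (size s) s &&
  all (fun n => trust_ok_at (R:=R) alpha beta c r n s) (iota 0 (size s)).

Definition q {R : realType} (alpha beta c r : nat) (theta : R) : \bar R :=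
  cond_exp (trust_quit (R:=R) alpha beta c r) theta.

(* Main.v *)
Require Import Defs.
From HB Require Import structures.
From mathcomp Require Import all_boot all_order all_algebra.
From mathcomp Require Import all_classical all_reals all_analysis.
From mathcomp Require Import zify ring lra.
Import Order.TTheory GRing.Theory Num.Theory numFieldNormedType.Exports.
Local Open Scope ring_scope.
Local Open Scope classical_set_scope.


Section Comb.
Variable R : realType.

Lemma sum_tuple0 (F : 0.-tuple bool -> R) : \sum_(s : 0.-tuple bool) F s = F [tuple].
Proof.
rewrite (eq_bigr (fun _ => F [tuple])); last by move=> s _; rewrite tuple0.
by rewrite sumr_const card_tuple /= expn0.
Qed.

Lemma sum_tupleS t (F : t.+1.-tuple bool -> R) :
  \sum_(s : t.+1.-tuple bool) F s =
  \sum_(b : bool) \sum_(s : t.-tuple bool) F [tuple of b :: s].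
Proof.
rewrite pair_big /=.
rewrite (reindex (fun p : bool * t.-tuple bool => [tuple of p.1 :: p.2])) //=.
exists (fun s : t.+1.-tuple bool => (thead s, [tuple of behead s])).
  by move=> [b s] _ /=; congr pair; apply: val_inj.
by move=> s _; rewrite [RHS]tuple_eta; apply: val_inj.
Qed.

Lemma Zwalk0 c r s : Zwalk c r 0 s = 0.
Proof. by rewrite /Zwalk big_ord0. Qed.

Lemma ZwalkS c r k b s : Zwalk c r k.+1 (b :: s) =
  (if b then - (r%:Z) else c%:Z) + Zwalk c r k s.
Proof. by rewrite /Zwalk big_ord_recl. Qed.

Variables (r : nat) (theta : R).
Definition P (u : int) (t : nat) : R := Pstop (walk_hit 1 r u) theta t.

Lemma P0 u : P u 0 = ((u <= 0)%R)%:R.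
Proof.
rewrite /P /Pstop sum_tuple0 /seqprob /= big_nil mul1r /walk_hit /=.
by rewrite Zwalk0 andbT.
Qed.

Lemma walk_hit_cons u b s : walk_hit 1 r u (b :: s) =
  (0 < u) && walk_hit 1 r (u - (if b then - (r%:Z) else 1)) s.
Proof.
rewrite /walk_hit /= ZwalkS Zwalk0 (iotaDl 1 0) all_map.
rewrite (eq_all (a2 := fun k => Zwalk 1 r k s < u - (if b then - (r%:Z) else 1))); last first.
  by move=> k /=; rewrite add1n ZwalkS; case: b; lia.
rewrite andbCA; congr (_ && _); congr (_ && _); case: b; lia.
Qed.

Lemma Pneg u t : u <= 0 -> P u t.+1 = 0.
Proof.
move=> hu; rewrite /P /Pstop sum_tupleS big1 // => b _.
rewrite big1 // => s _ /=; rewrite walk_hit_cons.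
by rewrite ltNge hu /= mulr0.
Qed.

Lemma Ppos u t : 0 < u -> P u t.+1 = (1 - theta) * P (u - 1) t + theta * P (u + r%:Z) t.
Proof.
move=> hu; rewrite /P /Pstop sum_tupleS big_bool /= addrC.
rewrite !mulr_sumr; congr (_ + _); apply: eq_bigr => s _;
  rewrite walk_hit_cons hu /= /seqprob big_cons /= ?opprK mulrA //.
Qed.
End Comb.

Section Trust.
Variable R : realType.
Variables (r alpha beta : nat).
Hypothesis hab : (0 < alpha + beta)%N.

Lemma trust_okE Sh Fh : trust_ok (R:=R) alpha beta 1 r Sh Fh =
  (Fh%:Z - r%:Z * Sh%:Z < r%:Z * alpha%:Z - beta%:Z + 1).
Proof.
rewrite /trust_ok /theta_hat.
set a := (alpha + Sh)%N; set n := (alpha + beta + Sh + Fh)%N.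
have n0 : (0 < n%:R :> R) by rewrite ltr0n /n; lia.
have -> : r%:R * (a%:R / n%:R) - 1%:R * (1 - a%:R/n%:R) =
   ((r*a + a)%:R - n%:R) / n%:R :> R.
  by rewrite natrD natrM; field; rewrite lt0r_neq0.
rewrite ler_pdivlMr // mul0r subr_ge0 ler_nat /a /n.
by apply/idP/idP => ?; lia.
Qed.

Let u := r%:Z * alpha%:Z - beta%:Z + 1.

Lemma trust_state_walk s n : (n <= size s)%N ->
  all (fun k => Zwalk 1 r k s < u) (iota 0 n) ->
  exists Sh Fh, trust_state (R:=R) alpha beta 1 r (take n s) = (Sh, Fh, true) /\
     Fh%:Z - r%:Z * Sh%:Z = Zwalk 1 r n s.
Proof.
elim: n => [|n IH] hn.
  move=> _; exists 0%N; exists 0%N; rewrite take0 Zwalk0; split => //; lia.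
have -> : iota 0 n.+1 = iota 0 n ++ [:: n] by rewrite -addn1 iotaD.
rewrite all_cat /= andbT => /andP[hall hZ].
have [Sh [Fh [hst hZ']]] := IH (ltnW hn) hall.
rewrite (take_nth false hn) /trust_state foldl_rcons -/(trust_state _ _ _ _ _) hst /=.
rewrite trust_okE hZ' hZ /=.
exists (Sh + nth false s n)%N, (Fh + ~~ nth false s n)%N; split; first by rewrite !andbT.
rewrite /Zwalk big_ord_recr /= -/(Zwalk 1 r n s) -hZ'.
by case: (nth false s n) => /=; lia.
Qed.

Lemma trust_quit_walk : trust_quit (R:=R) alpha beta 1 r =1 walk_hit 1 r u.
Proof.
move=> s.
have key : forall n, (n <= size s)%N ->
  all (fun k => trust_ok_at (R:=R) alpha beta 1 r k s) (iota 0 n) =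
  all (fun k => Zwalk 1 r k s < u) (iota 0 n) /\
  (all (fun k => Zwalk 1 r k s < u) (iota 0 n) ->
     trust_ok_at (R:=R) alpha beta 1 r n s = (Zwalk 1 r n s < u)).
  elim => [|n IH] hn.
    split => // _; rewrite /trust_ok_at take0 /= trust_okE Zwalk0; lia.
  have [IH1 IH2] := IH (ltnW hn).
  have hsplit : forall (p : pred nat), all p (iota 0 n.+1) = all p (iota 0 n) && p n.
    by move=> p; rewrite -addn1 iotaD add0n all_cat /= andbT.
  rewrite !hsplit IH1.
  case hall: (all (fun k => Zwalk 1 r k s < u) (iota 0 n)) => /=; last by split.
  rewrite (IH2 hall); split => // hZ.
  have [Sh [Fh [hst hZ']]] := trust_state_walk s n.+1 hn (ltac:(by rewrite hsplit hall hZ)).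
  by rewrite /trust_ok_at hst trust_okE hZ'.
have [k1 k2] := key (size s) (leqnn _).
rewrite /trust_quit /walk_hit k1.
case hall: (all _ (iota 0 (size s))); last by rewrite !andbF.
by rewrite (k2 hall) -leNgt.
Qed.
End Trust.

Section Rec.
Variable R : realType.
Variables (r : nat) (theta : R).
Definition Pn (a t : nat) : R := @P R r theta a%:Z t.

Lemma Pn0 t : Pn 0 t = (t == 0%N)%:R.
Proof. by case: t => [|t]; rewrite /Pn ?P0 ?Pneg. Qed.

Lemma PnS0 k : Pn k.+1 0 = 0.
Proof. by rewrite /Pn P0. Qed.

Lemma PnSS k t : Pn k.+1 t.+1 = (1 - theta) * Pn k t + theta * Pn (k.+1 + r) t.
Proof.
rewrite /Pn Ppos //; congr (_ * P _ _ _ _ _ + _ * P _ _ _ _ _); lia.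
Qed.

Lemma Pn_conv t a b : Pn (a + b) t = \sum_(i < t.+1) Pn a i * Pn b (t - i).
Proof.
elim: t a b => [|t IH] a b.
  rewrite big_ord_recl big_ord0 addr0 /=.
  case: a => [|a]; first by rewrite Pn0 mul1r.
  by rewrite PnS0 mul0r addSn PnS0.
case: a => [|a].
  rewrite big_ord_recl Pn0 mul1r subn0 big1 ?addr0 // => i _.
  by rewrite Pn0 mul0r.
rewrite big_ord_recl PnS0 mul0r add0r.
under eq_bigr => i _ do rewrite /bump /= ?add1n subSS PnSS mulrDl -!mulrA.
rewrite big_split /= -!mulr_sumr -!IH addSn PnSS.
by congr (_ + _ * Pn _ _); lia.
Qed.
End Rec.
Arguments Pn {R}.

Section G.
Variable R : realType.
Implicit Types (f g a b : nat -> R).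

Definition ps f n : R := \sum_(t < n) f t.
Definition conv a b t : R := \sum_(i < t.+1) a i * b (t - i)%N.

Lemma ps0 f : ps f 0 = 0. Proof. by rewrite /ps big_ord0. Qed.
Lemma psS f n : ps f n.+1 = ps f n + f n. Proof. by rewrite /ps big_ord_recr. Qed.
Lemma psSl f n : ps f n.+1 = f 0%N + ps (fun t => f t.+1) n.
Proof. by rewrite /ps big_ord_recl. Qed.
Lemma ps_split f m k : ps f (m + k) = ps f m + \sum_(i < k) f (m + i)%N.
Proof. by rewrite /ps big_split_ord. Qed.

Lemma ps_ge0 f n : (forall t, 0 <= f t) -> 0 <= ps f n.
Proof. by move=> h; rewrite /ps sumr_ge0. Qed.

Lemma ps_mono f m n : (forall t, 0 <= f t) -> (m <= n)%N -> ps f m <= ps f n.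
Proof.
move=> h /subnKC <-; rewrite ps_split lerDl sumr_ge0 //.
Qed.

Lemma limE (u : nat -> R) (l : R) : u @ \oo --> l -> limn u = l.
Proof. exact: (cvg_lim (@Rhausdorff R)). Qed.

Arguments limE {u l}.

Lemma cvg_uniq (u : nat -> R) (l1 l2 : R) : u @ \oo --> l1 -> u @ \oo --> l2 -> l1 = l2.
Proof. by move=> h1 h2; rewrite -(limE h1) (limE h2). Qed.

Lemma lim_le (u : nat -> R) (l B : R) : u @ \oo --> l -> (forall n, u n <= B) -> l <= B.
Proof.
move=> hu hB; apply: (ler_cvg_to hu (cvg_cst B)); exact: nearW.
Qed.

Lemma lim_ge (u : nat -> R) (l B : R) : u @ \oo --> l -> (forall n, B <= u n) -> B <= l.
Proof.
move=> hu hB; apply: (ler_cvg_to (cvg_cst B) hu); exact: nearW.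
Qed.

Lemma cvg_nd f (B : R) : (forall t, 0 <= f t) -> (forall n, ps f n <= B) ->
  exists l, [/\ ps f @ \oo --> l, (forall n, ps f n <= l) & l <= B].
Proof.
move=> f0 fB.
have nd : nondecreasing_seq (ps f) by move=> m n; exact: ps_mono.
have ub : has_ubound (range (ps f)) by exists B => _ [n _ <-].
have hc := nondecreasing_cvgn nd ub.
exists (sup (range (ps f))); split => //; last exact: lim_le hc fB.
move=> n; rewrite -(limE hc); apply: nondecreasing_cvgn_le => //.
exact: cvgP hc.
Qed.

Lemma tri (F : nat -> nat -> R) n :
  \sum_(t < n) \sum_(i < t.+1) F i (t - i)%N = \sum_(i < n) \sum_(j < n - i) F i j.
Proof.
elim: n => [|n IH]; first by rewrite !big_ord0.
rewrite big_ord_recr /= IH [RHS]big_ord_recr /= subSnn big_ord1.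
have E : \sum_(i < n) \sum_(j < n.+1 - i) F i j =
         \sum_(i < n) (\sum_(j < n - i) F i j + F i (n - i)%N).
  by apply: eq_bigr => i _; rewrite subSn ?big_ord_recr // ltnW.
rewrite E big_split /= -addrA; congr (_ + _).
by rewrite big_ord_recr /= subnn.
Qed.

Lemma ps_conv a b n : ps (conv a b) n = \sum_(i < n) a i * ps b (n - i).
Proof.
rewrite /ps /conv (tri (fun i j => a i * b j)); apply: eq_bigr => i _.
by rewrite mulr_sumr.
Qed.

Lemma cauchy_nn a b (A B : R) : (forall t, 0 <= a t) -> (forall t, 0 <= b t) ->
  ps a @ \oo --> A -> ps b @ \oo --> B -> ps (conv a b) @ \oo --> A * B.
Proof.
move=> a0 b0 hA hB.
have nda : forall n, ps a n <= A.
  move=> n; rewrite -(limE hA); apply: nondecreasing_cvgn_le;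
   [by move=> ? ?; exact: ps_mono | exact: cvgP hA].
have ndb : forall n, ps b n <= B.
  move=> n; rewrite -(limE hB); apply: nondecreasing_cvgn_le;
   [by move=> ? ?; exact: ps_mono | exact: cvgP hB].
have c0 : forall t, 0 <= conv a b t.
  by move=> t; rewrite /conv sumr_ge0 // => i _; rewrite mulr_ge0.
have up : forall n, ps (conv a b) n <= ps a n * ps b n.
  move=> n; rewrite ps_conv /ps mulr_suml; apply: ler_sum => i _.
  by rewrite ler_wpM2l // ps_mono // leq_subr.
have low : forall n, ps a n * ps b n <= ps (conv a b) (n + n).
  move=> n; rewrite ps_conv.
  have -> : \sum_(i < n + n) a i * ps b (n + n - i) =
     ps (fun i => a i * ps b (n + n - i)) (n + n) by [].
  have hnn : forall t, 0 <= a t * ps b (n + n - t) by move=> t; rewrite mulr_ge0 // ps_ge0.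
  apply: le_trans (@ps_mono (fun i => a i * ps b (n + n - i)) n (n + n) hnn (leq_addr n n)).
  rewrite /ps mulr_suml; apply: ler_sum => i _.
  rewrite ler_wpM2l // ps_mono //; move: (ltn_ord i); lia.
have [L [hL hLn hLB]] : exists L, [/\ ps (conv a b) @ \oo --> L,
    (forall n, ps (conv a b) n <= L) & L <= A * B].
  apply: cvg_nd => // n; apply: le_trans (up n) _.
  apply: ler_pM => //; exact: ps_ge0.
suff -> : A * B = L by [].
apply/eqP; rewrite eq_le hLB andbT.
apply: (@lim_le (fun n => ps a n * ps b n)); first exact: cvgM.
by move=> n; apply: le_trans (low n) (hLn _).
Qed.

Lemma abs_cvg a (K : R) : (forall n, ps (fun t => `|a t|) n <= K) -> exists A : R, ps a @ \oo --> A.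
Proof.
move=> hK.
have hs : forall f, ps f = series f.
  by move=> f; apply: funext => n; rewrite /ps /series /= big_mkord.
have : cvgn (series a).
  apply: normed_cvg; have [l [hl _ _]] := cvg_nd _ K (fun t => normr_ge0 (a t)) hK.
  have -> : [normed series a] = ps (fun t => `|a t|).
    by apply: funext => n; rewrite hs.
  by apply/cvg_ex; exists l.
by rewrite -hs => /cvg_ex [A hA]; exists A.
Qed.

Lemma Dabs g m n : (m <= n)%N ->
  `|ps g n - ps g m| <= ps (fun t => `|g t|) n - ps (fun t => `|g t|) m.
Proof.
move=> /subnKC <-; rewrite !ps_split !(addrC (ps _ m)) !addrK.
exact: ler_norm_sum.
Qed.

Lemma cauchy_abs a b (A B Ka Kb : R) :
  (forall n, ps (fun t => `|a t|) n <= Ka) -> (forall n, ps (fun t => `|b t|) n <= Kb) ->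
  ps a @ \oo --> A -> ps b @ \oo --> B -> ps (conv a b) @ \oo --> A * B.
Proof.
move=> ha hb hA hB.
set a' := fun t => `|a t|; set b' := fun t => `|b t|.
have [A' [hA' _ _]] := cvg_nd _ Ka (fun t => normr_ge0 (a t)) ha.
have [B' [hB' _ _]] := cvg_nd _ Kb (fun t => normr_ge0 (b t)) hb.
have hC' := cauchy_nn _ _ _ _ (fun t => normr_ge0 (a t)) (fun t => normr_ge0 (b t)) hA' hB'.
set X := fun n => ps a n * ps b n - ps (conv a b) n.
set Y := fun n => ps a' n * ps b' n - ps (conv a' b') n.
have XY : forall n, `|X n| <= Y n.
  move=> n; rewrite /X /Y !ps_conv /ps !mulr_suml -!sumrB.
  apply: le_trans (ler_norm_sum _ _ _) _; apply: ler_sum => i _.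
  rewrite -!mulrBr normrM /a' ler_wpM2l //.
  exact: (Dabs b (n - i) n (leq_subr i n)).
have hY : Y @ \oo --> 0.
  have := cvgB (cvgM hA' hB') hC'; rewrite subrr; exact.
have hX : X @ \oo --> 0.
  apply: (squeeze_cvgr (f := fun n => - Y n) (h := Y)); last exact: hY.
    by apply: nearW => n; rewrite -ler_norml.
  by rewrite -oppr0; apply: cvgN.
have -> : ps (conv a b) = (fun n => ps a n * ps b n - X n).
  by apply: funext => n; rewrite /X opprB addrC subrK.
by rewrite -[A * B]subr0; apply: cvgB => //; exact: cvgM.
Qed.
End G.
Arguments ps {R}. Arguments conv {R}.
Arguments abs_cvg {R a K}. Arguments cauchy_abs {R a b A B Ka Kb}.
Arguments cauchy_nn {R a b A B}. Arguments cvg_nd {R f B}.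
Arguments limE {R u l}. Arguments cvg_uniq {R u l1 l2}.
Arguments lim_le {R u l B}. Arguments lim_ge {R u l B}.

Section Main.
Variable R : realType.
Variables (r : nat) (theta rho : R).
Hypothesis hr : (0 < r)%N.
Hypothesis ht0 : 0 < theta.
Hypothesis ht1 : theta < 1.
Hypothesis hr0 : 0 <= rho.
Hypothesis hr1 : rho < 1.
Hypothesis hrho : rho = (1 - theta) + theta * rho ^+ r.+1.

Local Notation p := (Pn r theta).

Lemma ps_lin2 (c d : R) (f g : nat -> R) n :
  ps (fun t => c * f t + d * g t) n = c * ps f n + d * ps g n.
Proof. by rewrite /ps big_split /= !mulr_sumr. Qed.

Lemma p_ge0 a t : 0 <= p a t.
Proof.
elim: t a => [|t IH] [|k].
- by rewrite Pn0.
- by rewrite PnS0.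
- by rewrite Pn0.
- rewrite PnSS addr_ge0 // mulr_ge0 //; last exact: ltW.
  by rewrite subr_ge0 ltW.
Qed.

Lemma ps_p0 (f : nat -> R) n : ps (fun t => p 0 t * f t) n.+1 = f 0%N.
Proof.
rewrite psSl Pn0 mul1r /ps big1 ?addr0 // => i _.
by rewrite Pn0 mul0r.
Qed.

Lemma Mbound a n : ps (p a) n <= rho ^+ a.
Proof.
elim: n a => [|n IH] a; first by rewrite ps0 exprn_ge0.
case: a => [|k].
  by rewrite expr0 psSl Pn0 /ps big1 ?addr0 // => i _; rewrite Pn0.
rewrite psSl PnS0 add0r.
rewrite (_ : ps _ n = ps (fun t => (1 - theta) * p k t + theta * p (k.+1 + r) t) n);
  last by apply: eq_bigr => i _; rewrite PnSS.
rewrite ps_lin2.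
have -> : rho ^+ k.+1 = (1 - theta) * rho ^+ k + theta * rho ^+ (k.+1 + r).
  have e : rho ^+ (k.+1 + r) = rho ^+ k * rho ^+ r.+1.
    by rewrite -exprD; congr (_ ^+ _); lia.
  by rewrite e exprS [X in X * _ = _]hrho; ring.
by apply: lerD; apply: ler_wpM2l; [rewrite ?subr_ge0 ltW | exact: IH | rewrite ltW | exact: IH].
Qed.

Lemma rho_gt0 : 0 < rho.
Proof.
have h : 1 - theta <= rho.
  by rewrite [X in _ <= X]hrho lerDl mulr_ge0 ?exprn_ge0 // ltW.
by apply: lt_le_trans h; rewrite subr_gt0.
Qed.

Lemma ltr1_rho : 0 < 1 - rho. Proof. by rewrite subr_gt0. Qed.

Lemma powle (x y : R) n : 0 <= x -> x <= y -> x ^+ n <= y ^+ n.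
Proof.
move=> x0 xy; elim: n => [|n IH]; first by rewrite !expr0.
by rewrite !exprS ler_pM // exprn_ge0.
Qed.

Lemma sum_geo : theta * \sum_(i < r.+1) rho ^+ i = 1.
Proof.
have h : (1 - rho) * (1 - theta * \sum_(i < r.+1) rho ^+ i) = 0.
  have := subrXX 1 rho r.+1; rewrite expr1n /=.
  under eq_bigr => i _ do rewrite expr1n mul1r.
  move=> e.
  have : 1 - rho = theta * (1 - rho ^+ r.+1) by rewrite {1}hrho; ring.
  rewrite e => e2; rewrite mulrBr mulr1 {1}e2; ring.
move/eqP: h; rewrite mulf_eq0 subr_eq0 => /orP[/eqP h|]; first by move: hr1; rewrite -h ltxx.
by rewrite subr_eq0 => /eqP <-.
Qed.

Lemma tq : theta * r.+1%:R * rho ^+ r < 1.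
Proof.
rewrite -[X in _ < X]sum_geo -mulrA ltr_pM2l // big_ord_recl expr0.
have -> : r.+1%:R = 1 + r%:R :> R by rewrite -natr1 addrC.
rewrite mulrDl mul1r ltr_leD //; first by rewrite exprn_ilt1 // -lt0n.
rewrite mulr_natl -[X in _ *+ X](card_ord r) -sumr_const ler_sum // => i _.
rewrite /bump /= ?add1n; apply: ler_wiXn2l => //; first exact: ltW.
Qed.

Definition Q := r.+1%:R * (1 - theta) - r%:R * rho.

Lemma QE : Q = rho * (1 - theta * r.+1%:R * rho ^+ r).
Proof.
have e : theta * rho ^+ r.+1 = rho - (1 - theta) by rewrite {2}hrho; ring.
rewrite /Q (_ : rho * (1 - theta * r.+1%:R * rho ^+ r) = rho - r.+1%:R * (theta * rho ^+ r.+1)).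
  by rewrite e -natr1; ring.
by rewrite exprS; ring.
Qed.

Lemma Q_gt0 : 0 < Q.
Proof. by rewrite QE mulr_gt0 ?rho_gt0 // subr_gt0 tq. Qed.

Lemma root_uniq x : 0 <= x -> x <= rho -> x = (1 - theta) + theta * x ^+ r.+1 -> x = rho.
Proof.
move=> x0 xr hx.
set S := \sum_(i < r.+1) rho ^+ (r.+1.-1 - i) * x ^+ i.
have e : (rho - x) * (1 - theta * S) = 0.
  have := subrXX rho x r.+1; rewrite -/S => e.
  have : rho - x = theta * (rho ^+ r.+1 - x ^+ r.+1) by rewrite {1}hrho {1}hx; ring.
  rewrite e => e2; rewrite mulrBr mulr1 {1}e2; ring.
have hS : S <= r.+1%:R * rho ^+ r.
  rewrite mulr_natl -[X in _ *+ X](card_ord r.+1) -sumr_const /S.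
  apply: ler_sum => i _ /=.
  have e3 : rho ^+ r = rho ^+ (r - i) * rho ^+ i by rewrite -exprD subnK // -ltnS.
  by rewrite [X in _ <= X]e3 ler_wpM2l ?exprn_ge0 // powle.
move/eqP: e; rewrite mulf_eq0 => /orP[/eqP|/eqP e]; first by move/eqP; rewrite subr_eq0 => /eqP.
have := tq; rewrite -mulrA => h.
have : theta * S < 1 by apply: le_lt_trans h; rewrite ler_wpM2l // ltW.
by move/eqP: e; rewrite subr_eq0 => /eqP <-; rewrite ltxx.
Qed.

Definition Gf a (z : R) : R := limn (ps (fun t => p a t * z ^+ t)).

Lemma Mle1 a n : ps (p a) n <= 1.
Proof. by apply: le_trans (Mbound a n) _; rewrite exprn_ile1 // ltW. Qed.

Lemma absbound a (z : R) : `|z| <= 1 -> forall n, ps (fun t => `|p a t * z ^+ t|) n <= 1.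
Proof.
move=> hz n; apply: le_trans (Mle1 a n); apply: ler_sum => t _.
rewrite normrM normrX (ger0_norm (p_ge0 _ _)) ler_piMr ?p_ge0 //.
by rewrite exprn_ile1.
Qed.

Lemma cvgG a (z : R) : `|z| <= 1 -> ps (fun t => p a t * z ^+ t) @ \oo --> Gf a z.
Proof.
move=> hz; have [A hA] := abs_cvg (absbound a z hz).
by rewrite /Gf (limE hA).
Qed.

Lemma Gf_add a b (z : R) : `|z| <= 1 -> Gf (a + b) z = Gf a z * Gf b z.
Proof.
move=> hz.
have h := cauchy_abs (absbound a z hz) (absbound b z hz) (cvgG a z hz) (cvgG b z hz).
apply: cvg_uniq (cvgG (a + b) z hz) _.
have -> : ps (fun t => p (a + b) t * z ^+ t) =
          ps (conv (fun t => p a t * z ^+ t) (fun t => p b t * z ^+ t)).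
  apply: funext => n; apply: eq_bigr => t _.
  rewrite /conv Pn_conv mulr_suml; apply: eq_bigr => i _.
  have hi : (i <= t)%N by rewrite -ltnS.
  have e : z ^+ t = z ^+ i * z ^+ (t - i) by rewrite -exprD subnKC.
  rewrite e; ring.
exact: h.
Qed.

Lemma Gf0 (z : R) : Gf 0 z = 1.
Proof.
apply: limE; rewrite -cvg_shiftS; apply: cvg_near_cst; apply: nearW => n /=.
by rewrite ps_p0 expr0.
Qed.

Lemma Gf_pow a (z : R) : `|z| <= 1 -> Gf a z = Gf 1 z ^+ a.
Proof.
move=> hz; elim: a => [|a IH]; first by rewrite Gf0 expr0.
by rewrite -add1n Gf_add // IH exprS.
Qed.

Lemma Gf1_eq (z : R) : `|z| <= 1 ->
  Gf 1 z = z * (1 - theta) + z * theta * Gf 1 z ^+ r.+1.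
Proof.
move=> hz.
have h : ps (fun t => p 1 t * z ^+ t) @ \oo -->
          z * (1 - theta) * Gf 0 z + z * theta * Gf (1 + r) z.
  rewrite -cvg_shiftS.
  have -> : [sequence ps (fun t => p 1 t * z ^+ t) n.+1]_n =
     (fun n => z * (1 - theta) * ps (fun t => p 0 t * z ^+ t) n +
               z * theta * ps (fun t => p (1 + r) t * z ^+ t) n).
    apply: funext => n /=; rewrite psSl PnS0 mul0r add0r -ps_lin2.
    by apply: eq_bigr => t _; rewrite PnSS exprS; ring.
  apply: cvgD; apply: cvgM; (exact: cvg_cst || exact: cvgG).
have e := cvg_uniq (cvgG 1 z hz) h.
by rewrite Gf0 mulr1 (Gf_pow (1 + r) z hz) add1n in e.
Qed.

Lemma ps_add (f g : nat -> R) n : ps (fun t => f t + g t) n = ps f n + ps g n.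
Proof. by rewrite /ps big_split. Qed.

Lemma ps_z1 a : ps (fun t => p a t * 1 ^+ t) = ps (p a).
Proof. by apply: funext => n; apply: eq_bigr => t _; rewrite expr1n mulr1. Qed.

Lemma n1 : `|1 : R| <= 1. Proof. by rewrite normr1. Qed.

Lemma Gf11 : Gf 1 1 = rho.
Proof.
have hc := cvgG 1 1 n1; rewrite ps_z1 in hc.
apply: root_uniq.
- by apply: (lim_ge hc) => n; exact: ps_ge0 (p_ge0 _).
- by rewrite -[rho]expr1; apply: (lim_le hc) => n; exact: Mbound.
- by rewrite [LHS]Gf1_eq ?n1 // !mul1r.
Qed.

Lemma M_cvg a : ps (p a) @ \oo --> rho ^+ a.
Proof. by have := cvgG a 1 n1; rewrite ps_z1 Gf_pow ?n1 // Gf11. Qed.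

Definition K := rho / Q.

Lemma K_ge0 : 0 <= K.
Proof. by rewrite /K divr_ge0 // ltW // Q_gt0. Qed.

Lemma Nbound a n : ps (fun t => t%:R * p a t) n <= a%:R * rho ^+ a * K.
Proof.
elim: n a => [|n IH] a.
  by rewrite ps0 mulr_ge0 ?K_ge0 // mulr_ge0 ?exprn_ge0.
case: a => [|k].
  rewrite psSl mul0r add0r /ps big1 ?mul0r // => i _.
  by rewrite Pn0 /= mulr0.
rewrite psSl mul0r add0r.
rewrite (_ : ps _ n = (1 - theta) * (ps (fun t => t%:R * p k t) n + ps (p k) n) +
    theta * (ps (fun t => t%:R * p (k.+1 + r) t) n + ps (p (k.+1 + r)) n)); last first.
  rewrite -!ps_add -ps_lin2; apply: eq_bigr => t _.
  by rewrite PnSS -natr1; ring.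
have hQ : K * Q = rho by rewrite /K mulfVK // lt0r_neq0 // Q_gt0.
have hY : theta * rho ^+ r.+1 = rho - (1 - theta) by rewrite {2}hrho; ring.
have e1 : rho ^+ (k.+1 + r) = rho ^+ k * rho ^+ r.+1.
  by rewrite -exprD; congr (_ ^+ _); lia.
apply: (@le_trans _ _ ((1 - theta) * (k%:R * rho ^+ k * K + rho ^+ k) +
    theta * ((k.+1 + r)%:R * rho ^+ (k.+1 + r) * K + rho ^+ (k.+1 + r)))).
  apply: lerD; apply: ler_wpM2l; rewrite ?subr_ge0 ?(ltW ht1) ?(ltW ht0) //;
    apply: lerD => //; exact: Mbound.
rewrite le_eqVlt; apply/orP; left; apply/eqP.
rewrite e1 (exprS rho k).
move: hY; move: (rho ^+ k) (rho ^+ r.+1) => X Y hY.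
apply/eqP; rewrite -subr_eq0; apply/eqP.
transitivity (X * (rho - K * Q) + X * (1 + (k.+1 + r)%:R * K) * (theta * Y - (rho - (1 - theta)))).
  by rewrite /Q !natrD -!natr1; ring.
by rewrite hQ hY !subrr !mulr0 addr0.
Qed.

Definition Ef a : R := limn (ps (fun t => t%:R * p a t)).

Lemma tp_ge0 a t : 0 <= t%:R * p a t.
Proof. by rewrite mulr_ge0 ?p_ge0. Qed.

Lemma cvgE a : ps (fun t => t%:R * p a t) @ \oo --> Ef a.
Proof.
have [l [hl _ _]] := cvg_nd (tp_ge0 a) (Nbound a).
by rewrite /Ef (limE hl).
Qed.

Lemma Ef0 : Ef 0 = 0.
Proof.
apply: limE; apply: cvg_near_cst; apply: nearW => n.
rewrite /ps big1 // => t _; rewrite Pn0; case: (nat_of_ord t) => [|?]; by rewrite ?mul0r ?mulr0.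
Qed.

Lemma Ef_add a b : Ef (a + b) = Ef a * rho ^+ b + rho ^+ a * Ef b.
Proof.
have h1 := cauchy_nn (tp_ge0 a) (p_ge0 b) (cvgE a) (M_cvg b).
have h2 := cauchy_nn (p_ge0 a) (tp_ge0 b) (M_cvg a) (cvgE b).
have h := cvgD h1 h2.
apply: cvg_uniq (cvgE (a + b)) _.
have -> : ps (fun t => t%:R * p (a + b) t) =
    (fun n => ps (conv (fun t => t%:R * p a t) (p b)) n + ps (conv (p a) (fun t => t%:R * p b t)) n).
  apply: funext => n; rewrite -ps_add; apply: eq_bigr => t _.
  rewrite Pn_conv /conv mulr_sumr -big_split; apply: eq_bigr => i _ /=.
  have hi : (i <= t)%N by rewrite -ltnS.
  have e : (nat_of_ord t)%:R = i%:R + (t - i)%:R :> R by rewrite -natrD subnKC.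
  rewrite e; ring.
exact: h.
Qed.

Lemma Ef1 : Ef 1 = rho + theta * Ef (1 + r).
Proof.
have h : ps (fun t => t%:R * p 1 t) @ \oo -->
   (1 - theta) * (Ef 0 + rho ^+ 0) + theta * (Ef (1 + r) + rho ^+ (1 + r)).
  rewrite -cvg_shiftS.
  have -> : [sequence ps (fun t => t%:R * p 1 t) n.+1]_n =
     (fun n => (1 - theta) * (ps (fun t => t%:R * p 0 t) n + ps (p 0) n) +
               theta * (ps (fun t => t%:R * p (1 + r) t) n + ps (p (1 + r)) n)).
    apply: funext => n /=; rewrite psSl mul0r add0r -!ps_add -ps_lin2.
    by apply: eq_bigr => t _; rewrite PnSS -natr1; ring.
  apply: cvgD; apply: cvgM; (exact: cvg_cst || (apply: cvgD; [exact: cvgE | exact: M_cvg])).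
rewrite (cvg_uniq (cvgE 1) h) Ef0 expr0 add0r mulr1.
have hY : theta * rho ^+ r.+1 = rho - (1 - theta) by rewrite {2}hrho; ring.
rewrite add1n mulrDr hY; ring.
Qed.

Lemma Ef_mul a : Ef a * rho = a%:R * rho ^+ a * Ef 1.
Proof.
elim: a => [|a IH]; first by rewrite Ef0 !mul0r.
rewrite -add1n Ef_add expr1 mulrDl -mulrA (mulrC (rho ^+ a)) -mulrA IH.
rewrite natrD exprS; ring.
Qed.

Lemma Ef1_val : Ef 1 = rho ^+ 2 / Q.
Proof.
have hQ : Q != 0 by rewrite lt0r_neq0 // Q_gt0.
apply/(canRL (mulfK hQ)).
have h := Ef1.
have hm := Ef_mul (1 + r).
have hY : theta * rho ^+ r.+1 = rho - (1 - theta) by rewrite {2}hrho; ring.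
have : Ef 1 * rho = rho ^+ 2 + theta * (Ef (1 + r) * rho) by rewrite {1}h; ring.
rewrite hm add1n => e.
have e2 : Ef 1 * (rho - r.+1%:R * (theta * rho ^+ r.+1)) = rho ^+ 2 by rewrite [X in X = _]mulrBr e; ring.
rewrite -e2 hY /Q -natr1; ring.
Qed.

Lemma geo_id (z : R) t : 1 - z ^+ t = (1 - z) * \sum_(k < t) z ^+ k.
Proof.
rewrite -[1 in LHS](expr1n R t) subrXX; congr (_ * _).
by apply: eq_bigr => k _; rewrite expr1n mul1r.
Qed.

Lemma s_bounds (z : R) t : 0 <= z -> z <= 1 ->
  [/\ 0 <= t%:R - \sum_(k < t) z ^+ k, t%:R - \sum_(k < t) z ^+ k <= t%:R &
      t%:R - \sum_(k < t) z ^+ k <= (1 - z) * (t%:R * t%:R)].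
Proof.
move=> z0 z1.
have hs : t%:R - \sum_(k < t) z ^+ k = \sum_(k < t) (1 - z ^+ k).
  by rewrite sumrB sumr_const card_ord.
have b1 : forall k, 0 <= 1 - z ^+ k by move=> k; rewrite subr_ge0 exprn_ile1.
split.
- by rewrite hs sumr_ge0.
- by rewrite gerBl sumr_ge0 // => k _; rewrite exprn_ge0.
rewrite hs; apply: (@le_trans _ _ (\sum_(k < t) ((1 - z) * t%:R))).
  apply: ler_sum => k _.
  rewrite geo_id; apply: ler_wpM2l; first by rewrite subr_ge0.
  apply: le_trans (_ : \sum_(j < k) (1 : R) <= _).
    by apply: ler_sum => j _; rewrite exprn_ile1.
  by rewrite sumr_const card_ord ler_nat ltnW.
by rewrite sumr_const card_ord -(mulr_natr ((1 - z) * t%:R) t) -mulrA.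
Qed.

Lemma deriv_lim : (Gf 1 1 - Gf 1 z) / (1 - z) @[z --> 1^'-] --> Ef 1.
Proof.
apply/cvgrPdist_le => e e0.
have e20 : 0 < e / 2 by rewrite divr_gt0.
have [N _ hN] := (cvgrPdist_le _ _).1 (cvgE 1) (e / 2) e20.
have hNN := hN N (leqnn N).
set C := ps (fun t => t%:R * t%:R * p 1 t) N.
have C0 : 0 <= C by apply: ps_ge0 => t; rewrite !mulr_ge0 ?p_ge0.
have C10 : 0 < C + 1 by exact: ltr_wpDl C0 ltr01.
set d := e / 2 / (C + 1).
have d0 : 0 < d by rewrite divr_gt0.
have hNup : forall n, ps (fun t => t%:R * p 1 t) n <= Ef 1.
  have [l [hl hle _]] := cvg_nd (tp_ge0 1) (Nbound 1).
  by rewrite (cvg_uniq (cvgE 1) hl).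
near=> z.
have z1 : z < 1 by near: z; exact: nbhs_left_lt.
have z0 : 0 < z by near: z; apply: nbhs_left_gt; exact: ltr01.
have zd : 1 - d < z by near: z; apply: nbhs_left_gt; rewrite ltrBlDr ltrDl.
have nz : 1 - z != 0 by rewrite subr_eq0 gt_eqF.
have hz : `|z| <= 1 by rewrite ger0_norm ltW.
set w := fun t => p 1 t * (t%:R - \sum_(k < t) z ^+ k).
have hW : ps w @ \oo --> Ef 1 - (Gf 1 1 - Gf 1 z) / (1 - z).
  suff -> : ps w = (fun n => ps (fun t => t%:R * p 1 t) n -
      (ps (fun t => p 1 t * 1 ^+ t) n - ps (fun t => p 1 t * z ^+ t) n) * (1 - z)^-1).
    apply: cvgB; first exact: cvgE.
    apply: cvgM; last exact: cvg_cst.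
    by apply: cvgB; [exact: (cvgG 1 1 n1) | exact: (cvgG 1 z hz)].
  apply: funext => n; rewrite /ps -sumrB mulr_suml -sumrB; apply: eq_bigr => t _.
  rewrite /w expr1n mulr1.
  have -> : p 1 t - p 1 t * z ^+ t = p 1 t * (1 - z ^+ t) by ring.
  by rewrite geo_id; field; exact: nz.
have hw0 : forall t, 0 <= w t.
  by move=> j; rewrite /w mulr_ge0 ?p_ge0 //; have [] := s_bounds z j (ltW z0) (ltW z1).
have bnd : forall n, ps w n <= e.
  move=> n; apply: le_trans (@ps_mono _ w n (N + n) hw0 (leq_addl N n)) _.
  rewrite ps_split.
  have b1 : ps w N <= (1 - z) * C.
    rewrite /C /ps mulr_sumr; apply: ler_sum => t _.
    have [_ _ s3] := s_bounds z t (ltW z0) (ltW z1).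
    apply: le_trans (ler_wpM2l (p_ge0 1 t) s3) _.
    rewrite le_eqVlt; apply/orP; left; apply/eqP; ring.
  have b2 : \sum_(i < n) w (N + i)%N <= Ef 1 - ps (fun t => t%:R * p 1 t) N.
    apply: (@le_trans _ _ (\sum_(i < n) (N + i)%:R * p 1 (N + i)%N)).
      apply: ler_sum => i _; have [_ s2 _] := s_bounds z (N + i) (ltW z0) (ltW z1).
      by rewrite /w mulrC ler_wpM2r ?p_ge0.
    have := hNup (N + n)%N; rewrite ps_split => h.
    rewrite lerBrDl; exact: h.
  have b3 : Ef 1 - ps (fun t => t%:R * p 1 t) N <= e / 2.
    by apply: le_trans hNN; exact: ler_norm.
  have b4 : (1 - z) * C <= e / 2.
    apply: (@le_trans _ _ (d * C)).
      by rewrite ler_wpM2r // ltW // ltrBlDr addrC -ltrBlDr.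
    by rewrite /d mulrAC ler_pdivrMr // ler_pM2l // lerDl.
  have he : e = e / 2 + e / 2 by rewrite -splitr.
  rewrite [X in _ <= X]he; apply: lerD; first exact: le_trans b1 b4.
  exact: le_trans b2 b3.
have hL0 := lim_ge hW (fun n => @ps_ge0 _ w n hw0).
have hLe := lim_le hW bnd.
by rewrite ger0_norm.
Unshelve. all: by end_near.
Qed.

Lemma esum_cvg (f : nat -> R) (l : R) : ps f @ \oo --> l -> (\sum_(t <oo) (f t)%:E)%E = l%:E.
Proof.
move=> h.
rewrite (_ : (fun n => \sum_(0 <= t < n) (f t)%:E)%E = EFin \o ps f); last first.
  by apply: funext => n /=; rewrite sumEFin big_mkord.
rewrite EFin_lim ?(limE h) //; exact: cvgP h.
Qed.

Lemma cond_exp_val (u : nat) :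
  cond_exp (walk_hit 1 r u%:Z) theta = (Ef u / rho ^+ u)%:E.
Proof.
rewrite /cond_exp /Efin /Pfin.
by rewrite (esum_cvg _ _ (cvgE u)) (esum_cvg _ _ (M_cvg u)).
Qed.

Lemma main_sec :
  [/\ 0 < rho,
      (forall z : R, -1 <= z <= 1 ->
         phi r theta z = z * (1 - theta) + z * theta * phi r theta z ^+ r.+1) &
      (exists d : R,
         ((phi r theta 1 - phi r theta z) / (1 - z) @[z --> (1 : R)^'-] --> d) /\
         (forall u : nat,
            cond_exp (walk_hit 1 r u%:Z) theta = (u%:R * d / rho)%:E /\
            cond_exp (walk_hit 1 r u%:Z) theta =
              (u%:R * rho / ((1 - theta) * r.+1%:R - r%:R * rho))%:E))].
Proof using hr ht0 ht1 hr0 hr1 hrho.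
split; first exact: rho_gt0.
  move=> z hz; have hz' : `|z| <= 1 by rewrite ler_norml.
  exact: (Gf1_eq z hz').
exists (Ef 1); split; first exact: deriv_lim.
move=> u; rewrite cond_exp_val.
have r0 : rho != 0 by rewrite lt0r_neq0 // rho_gt0.
have ru0 : rho ^+ u != 0 by rewrite expf_neq0.
have q0 : Q != 0 by rewrite lt0r_neq0 // Q_gt0.
have eu : Ef u = u%:R * rho ^+ u * Ef 1 / rho by rewrite -Ef_mul mulfK.
have e1 : u%:R * Ef 1 / rho = u%:R * rho / ((1 - theta) * r.+1%:R - r%:R * rho).
  rewrite Ef1_val (_ : (1 - theta) * r.+1%:R - r%:R * rho = Q); last by rewrite /Q mulrC.
  by field; rewrite q0 r0.
split; congr EFin; rewrite eu; [ | rewrite -e1]; by field; rewrite ?ru0 ?r0.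
Qed.
End Main.

Theorem lemma3p4 (R : realType) (r : nat) (theta rho : R) :
  (0 < r)%N -> (r.+1%:R)^-1 < theta -> theta < 1 ->
  0 <= rho -> rho < 1 -> rho = (1 - theta) + theta * rho ^+ r.+1 ->
  [/\ 0 < rho,
      (forall z : R, -1 <= z <= 1 ->
         phi r theta z = z * (1 - theta) + z * theta * phi r theta z ^+ r.+1),
      (exists d : R,
         ((phi r theta 1 - phi r theta z) / (1 - z) @[z --> (1 : R)^'-] --> d) /\
         (forall u : nat,
            cond_exp (walk_hit 1 r u%:Z) theta = (u%:R * d / rho)%:E /\
            cond_exp (walk_hit 1 r u%:Z) theta =
              (u%:R * rho / ((1 - theta) * r.+1%:R - r%:R * rho))%:E)) &
      (forall alpha beta : nat, (0 < alpha + beta)%N ->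
         q alpha beta 1 r theta =
         cond_exp (walk_hit 1 r (r%:Z * alpha%:Z - beta%:Z + 1)) theta)].
Proof.
move=> hr hth ht1 hr0 hr1 hrho.
have ht0 : 0 < theta by apply: lt_trans hth; rewrite invr_gt0 ltr0n.
have [h1 h2 h3] := @main_sec R r theta rho hr ht0 ht1 hr0 hr1 hrho.
split => // alpha beta hab.
rewrite /q; congr cond_exp; apply: funext => s.
exact: (@trust_quit_walk R r alpha beta hab s).
Qed.
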